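(* Let $\widehat{\mathcal T}_{pl}$ be the completion (formal infinite sums, graded by number of edges) of the linear span $\mathcal T_{pl}$ over a field $k$ of characteristic zero of planar rooted trees, equipped with the associative product $\star$ described in the context, and let $\ell^{(n)}$ denote the ladder tree with $n$ edges. Put $X:=\bullet+\sum_{n\ge 1}\ell^{(n)}$, where $\bullet$ is the one-vertex tree (the unit for $\star$). Then $$\log^\star(X)=\sum_{n>0}\frac{1}{n}\sum_{\tau\in T_{pl},\ |\tau|=n}\frac{(-1)^{\mathcal L(\tau)-1}}{\binom{n-1}{\mathcal L(\tau)-1}}\,\tau ,$$ where $|\tau|$ is the number of edges of $\tau$ and $\mathcal L(\tau)$ is its number of leaves.
   Context: A planar rooted tree is a finite rooted tree embedded in the plane (the order of the children of each vertex matters); $T_{pl}$ is the set of such trees and $\mathcal T_{pl}$ its linear span. The one-vertex tree is denoted $\bullet$. For planar rooted trees $t_1,\dots,t_n$, $B_+(t_1\cdots t_n)$ is the tree obtained by attaching the roots of $t_1,\dots,t_n$ (in this left-to-right order) to a new common root. The left Butcher product of $t$ and $u=B_+(u_1\cdots u_p)$ (with $p\ge 0$, $u=\bullet$ when $p=0$) is $t\circ u:=B_+(t\,u_1\cdots u_p)$; every tree $t\neq\bullet$ decomposes uniquely as $t=t_1\circ t_2$. Extend $\circ$ bilinearly. The product $\star$ on $\mathcal T_{pl}$ is the bilinear product defined recursively by $\bullet\star t=t\star\bullet=t$ and, for $s=s_1\circ s_2$ and $t=t_1\circ t_2$, $s\star t=s_1\circ(s_2\star t)+(s\star t_1)\circ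 t_2$; it is associative, has unit $\bullet$, and is additive in the number of edges, so it extends to $\widehat{\mathcal T}_{pl}$. Ladder trees: $\ell^{(0)}=\bullet$, $\ell^{(n+1)}=\ell^{(n)}\circ\bullet$ (the tree with $n$ edges forming a single path from the root). For $L\in\widehat{\mathcal T}_{pl}$ with no component in degree $0$, $\log^\star(\bullet+L):=\sum_{k\ge1}\frac{(-1)^{k+1}}{k}L^{\star k}$. A leaf of a tree with at least one edge is a vertex with no children. *)

(* Defs.v *)
From HB Require Import structures.
From mathcomp Require Import all_boot all_order all_algebra.
Set Implicit Arguments. Unset Strict Implicit. Unset Printing Implicit Defensive.
Import GRing.Theory.
Local Open Scope ring_scope.

Inductive ptree := Node of seq ptree.

Definition bullet : ptree := Node [::].
Definition Bplus (ts : seq ptree) : ptree := Node ts.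

Fixpoint ptree_ind' (P : ptree -> Prop)
  (IH : forall ts, foldr (fun t A => P t /\ A) True ts -> P (Node ts)) (t : ptree) : P t :=
  match t with
  | Node ts => IH ts ((fix aux (ts : seq ptree) : foldr (fun t A => P t /\ A) True ts :=
                        match ts with
                        | [::] => I
                        | t :: ts' => conj (ptree_ind' IH t) (aux ts')
                        end) ts)
  end.

Fixpoint ptree_enc (t : ptree) : GenTree.tree unit :=
  match t with Node ts => GenTree.Node 0 (map ptree_enc ts) end.
Fixpoint ptree_dec (g : GenTree.tree unit) : ptree :=
  match g with
  | GenTree.Leaf _ => Node [::]
  | GenTree.Node _ gs => Node (map ptree_dec gs)
  end.
Lemma ptree_encK : cancel ptree_enc ptree_dec.
Proof.
elim/ptree_ind' => ts IH /=; congr Node; rewrite -map_comp.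
by elim: ts IH => [|t ts IHts] //= [-> /IHts ->].
Qed.
HB.instance Definition _ := Countable.copy ptree (can_type ptree_encK).

Fixpoint edges (t : ptree) : nat :=
  match t with Node ts => sumn (map (fun s => (edges s).+1) ts) end.

(* number of leaves (vertices without children); for the one-vertex tree it is 1
   by convention, which is never used in the statement *)
Fixpoint leaves (t : ptree) : nat :=
  match t with
  | Node [::] => 1
  | Node ts => sumn (map leaves ts)
  end.

Definition circ (t u : ptree) : ptree :=
  match u with Node us => Node (t :: us) end.

Fixpoint ladder (n : nat) : ptree :=
  if n is m.+1 then circ (ladder m) bullet else bullet.

(* The product star on basis trees, as an element of the span of trees with
   nonnegative integer coefficients, represented as a multiset (seq) of trees.
   For s = s1 o s2 = Node (s1 :: ss) (so s2 = Node ss), t = t1 o t2: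
   s * t = s1 o (s2 * t) + (s * t1) o t2.
   Defined with fuel; fuel (edges s + edges t).+1 suffices. *)
Fixpoint star_fuel (fuel : nat) (s t : ptree) : seq ptree :=
  match fuel with
  | 0 => [::]
  | f.+1 =>
    match s, t with
    | Node [::], _ => [:: t]
    | _, Node [::] => [:: s]
    | Node (s1 :: ss), Node (t1 :: ts) =>
        map (circ s1) (star_fuel f (Node ss) t)
        ++ map (fun x => circ x (Node ts)) (star_fuel f s t1)
    end
  end.

Definition star (s t : ptree) : seq ptree := star_fuel (edges s + edges t).+1 s t.

(* enumeration of forests of total weight n (weight of a tree = edges + 1)
   and of trees with exactly n edges *)
Fixpoint forests_fuel (fuel n : nat) : seq (seq ptree) :=
  match fuel with
  | 0 => [::]
  | f.+1 =>
    if n is 0 then [:: [::]]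
    else flatten [seq [seq Node c :: rest | c <- forests_fuel f e,
                                             rest <- forests_fuel f (n - e.+1)]
                 | e <- iota 0 n]
  end.

Definition trees_of_size (n : nat) : seq ptree := map Node (forests_fuel n.+1 n).

(* Completion \hat T_pl over R: arbitrary coefficient families. *)
Definition series (R : fieldType) := ptree -> R.

Definition delta (R : fieldType) (t : ptree) : series R := fun u => (u == t)%:R.

Definition sstar (R : fieldType) (f g : series R) : series R := fun u =>
  \sum_(i < (edges u).+1) \sum_(s <- trees_of_size i)
     \sum_(t <- trees_of_size (edges u - i))
        f s * g t * (count_mem u (star s t))%:R.

Fixpoint spow (R : fieldType) (f : series R) (k : nat) : series R :=
  if k is m.+1 then sstar f (spow f m) else delta R bullet.

(* X = bullet + sum_{n>=1} ladder n : coefficient 1 exactly on ladders *)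
Definition Xlad (R : fieldType) : series R := fun u => (u == ladder (edges u))%:R.

Definition series_lim (R : fieldType) (S : nat -> series R) (l : series R) : Prop :=
  forall u, exists N, forall M, (N <= M)%N -> S M u = l u.

Definition log_partial (R : fieldType) (L : series R) (M : nat) : series R := fun u =>
  \sum_(1 <= k < M.+1) ((-1) ^+ k.+1 / k%:R) * spow L k u.

Definition log_star (R : fieldType) (Y : series R) (l : series R) : Prop :=
  Y bullet = 1 /\ series_lim (log_partial (fun u => Y u - delta R bullet u)) l.

Definition rhs (R : fieldType) : series R := fun u =>
  let n := edges u in
  if n is 0 then 0
  else (n%:R)^-1 * ((-1) ^+ (leaves u).-1 / ('C(n.-1, (leaves u).-1))%:R).

(* Main.v *)
Require Import Defs.
From mathcomp Require Import all_boot all_order all_algebra.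
From mathcomp Require Import zify ring lra.
Import GRing.Theory.
Local Open Scope ring_scope.
Set Implicit Arguments. Unset Strict Implicit. Unset Printing Implicit Defensive.

Lemma Node_inj : injective Node. Proof. by move=> ? ? []. Qed.
Lemma Node_eq a b : (Node a == Node b) = (a == b).
Proof. by apply/eqP/eqP => [[->]|->]. Qed.

Lemma edges_cons t ts : edges (Node (t :: ts)) = ((edges t).+1 + edges (Node ts))%N.
Proof. by []. Qed.
Lemma leaves_cons t ts : leaves (Node (t :: ts)) = (leaves t + sumn (map leaves ts))%N.
Proof. by []. Qed.
Lemma leaves_Node ts : ts != [::] -> leaves (Node ts) = sumn (map leaves ts).
Proof. by case: ts. Qed.

Lemma ladderS n : ladder n.+1 = Node [:: ladder n].
Proof. by []. Qed.
Lemma edges_ladder n : edges (ladder n) = n.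
Proof. by elim: n => //= n ->; rewrite addn0. Qed.

Lemma leaves_le t : (leaves t <= (edges t).+1)%N /\ (t != bullet -> (leaves t <= edges t)%N).
Proof.
elim/ptree_ind': t => ts IH.
have H : (sumn (map leaves ts) <= edges (Node ts))%N.
  elim: ts IH => //= s ss IHs [[H1 _] /IHs]; exact: leq_add.
case: ts IH H => [|s ss] IH H //=; split => //.
by rewrite /= in H; apply: leq_trans H _.
Qed.

Lemma leaves_gt0 t : (0 < leaves t)%N.
Proof.
elim/ptree_ind': t => [[|s ss]] //= [H _]; exact: leq_trans H (leq_addr _ _).
Qed.

Lemma edges_gt0 t : t != bullet -> (0 < edges t)%N.
Proof. by case: t => [[|s ss]]. Qed.

Lemma star_fuel_eq f g s t : (edges s + edges t < f)%N -> (edges s + edges t < g)%N ->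
  star_fuel f s t = star_fuel g s t.
Proof.
elim: f g s t => [|f IH] [|g] s t //.
case: s => [[|s1 ss]]; case: t => [[|t1 ts]] //= Hf Hg.
rewrite (IH g (Node ss)) ?(IH g (Node (s1 :: ss)) t1) //.
all: move: Hf Hg; rewrite ?edges_cons /=; lia.
Qed.

Lemma star_bl t : star bullet t = [:: t].
Proof. by case: t. Qed.
Lemma star_br s : star s bullet = [:: s].
Proof. by case: s => [[|s1 ss]]. Qed.
Lemma star_fuel_cons f s1 ss t1 ts :
  star_fuel f.+1 (Node (s1 :: ss)) (Node (t1 :: ts)) =
  map (circ s1) (star_fuel f (Node ss) (Node (t1 :: ts)))
  ++ map (fun x => circ x (Node ts)) (star_fuel f (Node (s1 :: ss)) t1).
Proof. by []. Qed.

Lemma star_cons s1 ss t1 ts :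
  star (Node (s1 :: ss)) (Node (t1 :: ts)) =
  map (circ s1) (star (Node ss) (Node (t1 :: ts)))
  ++ map (fun x => circ x (Node ts)) (star (Node (s1 :: ss)) t1).
Proof.
rewrite {1}/star star_fuel_cons; congr (_ ++ _); congr map; apply: star_fuel_eq;
  rewrite ?edges_cons; lia.
Qed.

Fixpoint decomp (x : ptree) : seq (nat * ptree) :=
  match x with
  | Node [::] => [::]
  | Node (z :: zs) =>
      (if Node (z :: zs) == ladder (edges (Node (z :: zs)))
       then [:: (edges (Node (z :: zs)), bullet)] else [::])
      ++ (if (z == ladder (edges z)) && (zs != [::])
          then [:: ((edges z).+1, Node zs)] else [::])
      ++ map (fun p => (p.1, Node (p.2 :: zs))) (decomp z)
  end.

Lemma decomp_prop x p : p \in decomp x -> (0 < p.1)%N /\ (p.1 + edges p.2 = edges x)%N.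
Proof.
elim/ptree_ind': x p => [[|z zs]] //= [IHz _] p.
rewrite !mem_cat => /or3P [|| /mapP [q /IHz [H1 H2] ->]].
- by case: ifP => //; rewrite inE => _ /eqP -> /=; rewrite addn0.
- by case: ifP => //; rewrite inE => _ /eqP -> /=; split=> //; rewrite addSn.
- by rewrite /= H1; split => //; rewrite -H2 /=; lia.
Qed.

Lemma ladder_eq x n : (x == ladder n) = (x == ladder (edges x)) && (edges x == n).
Proof.
case: (x =P ladder n) => [->|H]; first by rewrite edges_ladder !eqxx.
by apply/esym/andP => [[/eqP H1 /eqP H2]]; apply: H; rewrite H1 H2.
Qed.

Lemma decomp_cons z zs : decomp (Node (z :: zs)) =
      (if Node (z :: zs) == ladder (edges (Node (z :: zs)))
       then [:: (edges (Node (z :: zs)), bullet)] else [::])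
      ++ (if (z == ladder (edges z)) && (zs != [::])
          then [:: ((edges z).+1, Node zs)] else [::])
      ++ map (fun p => (p.1, Node (p.2 :: zs))) (decomp z).
Proof. by []. Qed.

Lemma count1 (T : eqType) (a x : T) : count_mem x [:: a] = (a == x).
Proof. by rewrite /= addn0. Qed.

Lemma count_shift zs (q : nat * ptree) s :
  count (preim (fun p : nat * ptree => (p.1, Node (p.2 :: zs))) (pred1 q)) s =
  if q.2 is Node (t1 :: ts) then ((ts == zs) * count_mem (q.1, t1) s)%N else 0%N.
Proof.
case: q => i [[|t1 ts]] /=.
  by rewrite (@eq_count _ _ pred0) ?count_pred0 // => p /=; rewrite xpair_eqE Node_eq andbF.
case: (ts =P zs) => [->|H] /=.
  rewrite mul1n; apply: eq_count => p /=.
  by rewrite !xpair_eqE Node_eq eqseq_cons eqxx andbT.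
rewrite (@eq_count _ _ pred0) ?count_pred0 // => p /=.
rewrite xpair_eqE Node_eq eqseq_cons; apply/negbTE; apply/negP => /andP [_ /andP [_ /eqP E]].
exact: H.
Qed.

Lemma DC x i t : (0 < i)%N ->
  count_mem x (star (ladder i) t) = count_mem (i, t) (decomp x).
Proof.
case: i => // i _; rewrite ladderS.
elim/ptree_ind': x t => ts IH t; case: ts IH => [|z zs] IH.
- case: t => [[|t1 ts]]; first by rewrite star_br /= Node_eq.
  rewrite star_cons star_bl /= count_map; apply/eqP; rewrite addn_eq0 eqb0.
  rewrite Node_eq /=; apply/eqP; rewrite (@eq_count _ _ pred0) ?count_pred0 // => y /=; by rewrite Node_eq.
- case: IH => IHz _.
  rewrite decomp_cons !count_cat count_map count_shift.
  set x := Node (z :: zs).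
  case: t => [[|t1 ts]].
  + rewrite star_br count1 addn0.
    have -> : count_mem (i.+1, Node [::]) (if (z == ladder (edges z)) && (zs != [::])
          then [:: ((edges z).+1, Node zs)] else [::]) = 0%N.
      case: ifP => // /andP [_ H]; rewrite count1 xpair_eqE Node_eq.
      by rewrite (negbTE H) andbF.
    rewrite addn0 eq_sym -ladderS ladder_eq.
    by case: ifP => //= _; rewrite addn0 xpair_eqE eqxx andbT.
  + rewrite star_cons star_bl /= count_map.
    rewrite (@eq_count _ _ (fun y => (ts == zs) && (y == z))); last first.
      by move=> y /=; rewrite /x Node_eq eqseq_cons andbC.
    have -> : count (fun y => (ts == zs) && (y == z)) (star (Node [:: ladder i]) t1)
       = ((ts == zs) * count_mem z (star (Node [:: ladder i]) t1))%N.
      by case: (ts == zs) => /=; rewrite ?mul1n ?mul0n // count_pred0.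
    rewrite IHz.
    have -> : count_mem (i.+1, Node (t1 :: ts))
     (if x == ladder (edges x) then [:: (edges x, bullet)] else [::]) = 0%N.
      by case: ifP => // _; rewrite count1 xpair_eqE Node_eq andbF.
    rewrite add0n; congr (_ + _)%N.
    rewrite /x Node_eq eqseq_cons.
    case: (z =P ladder i) => [->|Hz].
      rewrite edges_ladder !eqxx /=.
      case: (zs =P t1 :: ts) => [->|Hzs] /=; first by rewrite !eqxx.
      have -> : (t1 :: ts == zs) = false by apply/negbTE/eqP => E; apply: Hzs; rewrite E.
      case: ifP => //= _; rewrite xpair_eqE Node_eq eqxx /= addn0.
      by case: eqP => // E; case: Hzs.
    have -> : (ladder i == z) = false by apply/negbTE/eqP => E; apply: Hz; rewrite E.
    case: ifP => //= /andP [/eqP Hl _]; rewrite xpair_eqE eqSS.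
    have -> : (edges z == i) = false.
      by apply/negbTE/eqP => E; apply: Hz; rewrite Hl E.
    by [].
Qed.

Lemma count_pairs (A B : seq (seq ptree)) F :
  count_mem F [seq Node c :: rest | c <- A, rest <- B] =
  if F is Node c0 :: r0 then (count_mem c0 A * count_mem r0 B)%N else 0%N.
Proof.
elim: A => [|c A IH]; first by case: F => [|[]].
rewrite /= count_cat IH count_map; clear IH.
case: F => [|[c0] r0] /=.
  by rewrite (@eq_count _ _ pred0) ?count_pred0.
rewrite mulnDl; congr (_ + _)%N.
case: (c =P c0) => [->|H] /=.
  by rewrite mul1n; apply: eq_count => y /=; rewrite eqseq_cons Node_eq eqxx.
rewrite mul0n (@eq_count _ _ pred0) ?count_pred0 // => y /=.
rewrite eqseq_cons Node_eq; case: eqP => //= E; case: H; exact: E.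
Qed.

Lemma sumn_iota_ind m n a (G : nat -> nat) :
  sumn [seq ((a == e) * G e)%N | e <- iota m n] = ((m <= a < m + n) * G a)%N.
Proof.
elim: n m => [|n IH] m /=.
  have -> : (m <= a < m + 0)%N = false.
    by apply/negbTE; apply/negP => /andP [H1 H2]; move: H1 H2; lia.
  by [].
rewrite IH addSnnS; case: (a =P m) => [->|H] /=.
  rewrite ltnn leqnn /= mul1n mul0n addn0 (_ : (m < m + n.+1)%N = true) ?mul1n //; lia.
rewrite mul0n add0n ltn_neqAle (_ : (m != a) = true) //; apply/eqP => E; apply: H; by rewrite E.
Qed.

Lemma forests_S f n : forests_fuel f.+1 n.+1 =
  flatten [seq [seq Node c :: rest | c <- forests_fuel f e,
                                      rest <- forests_fuel f (n.+1 - e.+1)]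
          | e <- iota 0 n.+1].
Proof. by []. Qed.

Lemma forests_count f n F : (n < f)%N ->
  count_mem F (forests_fuel f n) = (edges (Node F) == n).
Proof.
elim: f n F => // f IH n F Hn.
case: n Hn => [|n] Hn.
  by case: F => [|s ss] //=; rewrite addn0.
rewrite forests_S count_flatten -map_comp.
under eq_map => e do rewrite /= count_pairs.
case: F => [|[c0] r0].
  by rewrite /= add0n; elim: (iota 1 n) => //= ? ? ->.
rewrite (_ : [seq _ | e <- iota 0 n.+1] = [seq ((edges (Node c0) == e) *
            (edges (Node r0) == n.+1 - e.+1))%N | e <- iota 0 n.+1]); last first.
  apply/eq_in_map => e; rewrite mem_iota => /andP [_ He].
  rewrite !IH //; move: He Hn; lia.
rewrite sumn_iota_ind edges_cons add0n.
case: ltnP => H /=.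
  rewrite mul1n; move: H; rewrite /= => H; apply/eqP/eqP; lia.
rewrite mul0n; move: H; rewrite /= => H; case: eqP => //; lia.
Qed.

Lemma tos_count n t : count_mem t (trees_of_size n) = (edges t == n).
Proof.
case: t => F; rewrite /trees_of_size count_map -(@forests_count n.+1) //.
by apply: eq_count => G /=; rewrite Node_eq.
Qed.

Definition phi (k n l : nat) : nat := if (l <= k)%N then 'C(n - l, k - l) else 0%N.

Lemma phi_shift k n l : phi k.+1 n.+1 l.+1 = phi k n l.
Proof. by rewrite /phi ltnS !subSS. Qed.

Lemma phi_pascal k a b : (b < a)%N -> phi k a b = (phi k a b.+1 + phi k a.-1 b)%N.
Proof.
move=> Hab; rewrite /phi; case: (ltngtP b k) => H.
- have -> : (a - b = (a.-1 - b).+1)%N by lia.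
  have -> : (k - b = (k - b.+1).+1)%N by lia.
  have -> : (a - b.+1 = a.-1 - b)%N by lia.
  by rewrite binS addnC.
- by [].
- by rewrite H subnn !bin0.
Qed.

Lemma notlad z zs n : zs != [::] -> (Node (z :: zs) == ladder n) = false.
Proof.
case: n => [|n] Hzs; first by apply/negbTE/eqP.
by rewrite ladderS Node_eq eqseq_cons (negbTE Hzs) andbF.
Qed.

Lemma lad1 z : (Node [:: z] == ladder (edges (Node [:: z]))) = (z == ladder (edges z)).
Proof. by rewrite edges_cons addn0 ladderS Node_eq eqseq_cons andbT. Qed.

Lemma sumn_leaves_le zs : (sumn (map leaves zs) <= edges (Node zs))%N.
Proof.
elim: zs => //= s ss IH; apply: leq_add => //; exact: (leaves_le s).1.
Qed.

Lemma GL x : forall a b k, (b < a)%N ->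
  (\sum_(p <- decomp x) phi k (edges p.2 + a) (leaves p.2 + b)
   + ((x != bullet) && (x == ladder (edges x))) * phi k a.-1 b
  = (x != bullet) * phi k.+1 (edges x + a) (leaves x + b))%N.
Proof.
elim/ptree_ind': x => ts; case: ts => [|z zs] IH a b k Hab.
  by rewrite big_nil.
case: IH => IHz _.
rewrite decomp_cons !big_cat big_map.
have Ee : (edges (Node (z :: zs)) + a = edges z + ((edges (Node zs)).+1 + a))%N.
  by rewrite edges_cons; lia.
have El : (leaves (Node (z :: zs)) + b = leaves z + (sumn (map leaves zs) + b))%N.
  by rewrite leaves_cons; lia.
rewrite Ee El.
set x := Node (z :: zs).
set ezs := edges (Node zs).
set lzs := sumn (map leaves zs).
have T3 : (\sum_(j <- decomp z) phi k (edges (j.1, Node (j.2 :: zs)).2 + a)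
              (leaves (j.1, Node (j.2 :: zs)).2 + b)
   = \sum_(j <- decomp z) phi k (edges j.2 + (ezs.+1 + a)) (leaves j.2 + (lzs + b)))%N.
  apply: eq_bigr => q _; rewrite -[(q.1, _).2]/(Node (q.2 :: zs)) edges_cons leaves_cons -/ezs -/lzs; congr (phi _ _ _); lia.
rewrite T3.
have Hab' : (lzs + b < ezs.+1 + a)%N by have := sumn_leaves_le zs; rewrite -/ezs -/lzs; lia.
have IH' := IHz _ _ k Hab'.
have Hx : (x == ladder (edges x)) = (zs == [::]) && (z == ladder (edges z)).
  rewrite /x; case: (zs) => [|y ys]; first by rewrite lad1.
  by rewrite notlad.
have Hxb : (x != bullet) = true by rewrite /x /bullet Node_eq.
rewrite Hx Hxb mul1n /=.
have S1 : forall (c : bool) (p : nat * ptree),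
    (\sum_(i <- if c then [:: p] else [::]) phi k (edges i.2 + a) (leaves i.2 + b)
    = c * phi k (edges p.2 + a) (leaves p.2 + b))%N.
  by move=> [] p; rewrite ?big_seq1 ?big_nil ?mul1n.
rewrite !S1 /=.
case: (z =P bullet) => [Ez|Hz].
  have Ed : decomp z = [::] by rewrite Ez.
  rewrite Ed big_nil addn0 Ez /= add0n.
  case: (zs =P [::]) => [E|Hzs].
    have -> : ezs = 0%N by rewrite /ezs E.
    have -> : lzs = 0%N by rewrite /lzs E.
    rewrite E /= !mul1n mul0n addn0 !add0n !add1n phi_shift.
    by rewrite (phi_pascal _ Hab).
  rewrite -[sumn [seq (edges s).+1 | s <- zs]]/ezs /= mul0n add0n mul1n addn0.
  rewrite -[X in phi _ _ (X + b)]/(leaves (Node zs)) (leaves_Node (introN eqP Hzs)) -/lzs.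
  by rewrite add0n add1n addSn phi_shift.
have Hzb : (z != bullet) = true by apply/eqP.
rewrite Hzb mul1n addSn /= in IH'.
case: (zs =P [::]) => [E|Hzs].
  have Eezs : ezs = 0%N by rewrite /ezs E.
  have Elzs : lzs = 0%N by rewrite /lzs E.
  rewrite Eezs Elzs in IH' *.
  rewrite E /= !add0n add1n andbF mul0n add0n in IH' *.
  move: IH'; case: (z == ladder (edges z)) => /= IH'.
    rewrite !mul1n -IH' mul1n (phi_pascal _ Hab) add1n; lia.
  by rewrite !mul0n add0n addn0 -IH' addn0.
rewrite -[sumn [seq (edges s).+1 | s <- zs]]/ezs.
rewrite /= andbT !mul0n add0n addn0.
rewrite -[X in phi _ _ (X + b)]/(leaves (Node zs)) (leaves_Node (introN eqP Hzs)) -/lzs.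
rewrite addSn -IH'; lia.
Qed.

Definition Fk (k : nat) (u : ptree) : nat :=
  if u == bullet then (k == 0)%N : nat else phi k (edges u) (leaves u).

Lemma Fk_Node k y ys : Fk k (Node (y :: ys)) = phi k (edges (Node (y :: ys))) (leaves (Node (y :: ys))).
Proof. by rewrite /Fk /bullet Node_eq. Qed.

Lemma ML u k : (\sum_(p <- decomp u) Fk k p.2)%N = Fk k.+1 u.
Proof.
case: u => [[|y ys]]; first by rewrite big_nil /Fk eqxx.
rewrite decomp_cons !big_cat big_map Fk_Node.
have Ee : (edges (Node (y :: ys)) = edges y + (edges (Node ys)).+1)%N.
  by rewrite edges_cons; lia.
have El : (leaves (Node (y :: ys)) = leaves y + (sumn (map leaves ys) + 0))%N.
  by rewrite leaves_cons; lia.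
set x := Node (y :: ys).
have Hx : (x == ladder (edges x)) = (ys == [::]) && (y == ladder (edges y)).
  rewrite /x; case: (ys) => [|z zs]; first by rewrite lad1.
  by rewrite notlad.
rewrite Hx Ee El.
set ezs := edges (Node ys).
set lzs := sumn (map leaves ys).
have T3 : (\sum_(j <- decomp y) Fk k (j.1, Node (j.2 :: ys)).2
   = \sum_(j <- decomp y) phi k (edges j.2 + (ezs.+1 + 0)) (leaves j.2 + (lzs + 0)))%N.
  apply: eq_bigr => q _; rewrite -[(q.1, _).2]/(Node (q.2 :: ys)) Fk_Node edges_cons leaves_cons -/ezs -/lzs.
  congr (phi _ _ _); lia.
rewrite T3.
have Hab' : (lzs + 0 < ezs.+1 + 0)%N by have := sumn_leaves_le ys; rewrite -/ezs -/lzs; lia.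
have IH' := GL y k Hab'.
have S1 : forall (c : bool) (p : nat * ptree),
    (\sum_(i <- if c then [:: p] else [::]) Fk k i.2 = c * Fk k p.2)%N.
  by move=> [] p; rewrite ?big_seq1 ?big_nil ?mul1n.
rewrite !S1 /= !addn0 in IH' *.
have Fb : Fk k bullet = (k == 0)%N :> nat by rewrite /Fk eqxx.
have FN : ys != [::] -> Fk k (Node ys) = phi k ezs lzs.
  by move=> H; rewrite /Fk /bullet Node_eq (negbTE H) (leaves_Node H).
have p00 : phi k 0 0 = (k == 0)%N :> nat by rewrite /phi leq0n !subn0 bin0n.
rewrite Fb.
case: (y =P bullet) => [Ey|Hy].
  have Ed : decomp y = [::] by rewrite Ey.
  rewrite Ed big_nil addn0 Ey /=.
  case: (ys =P [::]) => [E|Hzs].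
    have -> : ezs = 0%N by rewrite /ezs E.
    have -> : lzs = 0%N by rewrite /lzs E.
    by rewrite E /= mul0n !addn0 /phi /= mul1n bin0n subSS subn0.
  rewrite (FN (introN eqP Hzs)).
  by rewrite /= mul1n add0n add1n phi_shift.
have Hzb : (y != bullet) = true by apply/eqP.
rewrite Hzb mul1n /= in IH'.
case: (ys =P [::]) => [E|Hzs].
  have Eezs : ezs = 0%N by rewrite /ezs E.
  have Elzs : lzs = 0%N by rewrite /lzs E.
  rewrite Eezs Elzs p00 in IH' *.
  rewrite E /= andbF mul0n add0n -IH'.
  by case: (y == ladder (edges y)); rewrite ?mul1n ?mul0n ?addn0 // addnC.
rewrite (FN (introN eqP Hzs)).
rewrite /= andbT mul0n add0n -IH'; lia.
Qed.

Section RPart.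
Variable R : fieldType.

Definition Lsr : series R := fun u => Xlad R u - delta R bullet u.

Lemma sum_ind (T : eqType) (r : seq T) (c : T) (G : T -> R) :
  \sum_(s <- r) (s == c)%:R * G s = (count_mem c r)%:R * G c.
Proof.
elim: r => [|x r IH]; first by rewrite big_nil mul0r.
rewrite big_cons IH /= natrD mulrDl; congr (_ + _).
by case: (x =P c) => [->|] //=; rewrite !mul0r.
Qed.

Lemma sum_ind' (T : eqType) (r : seq T) (c : T) (G : T -> R) :
  \sum_(s <- r) (c == s)%:R * G s = (count_mem c r)%:R * G c.
Proof. by rewrite -sum_ind; apply: eq_bigr => s _; rewrite eq_sym. Qed.

Lemma mem_tos i s : s \in trees_of_size i -> edges s = i.
Proof.
move=> H; have Hc : (0 < count_mem s (trees_of_size i))%N by rewrite -has_count has_pred1.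
by rewrite tos_count in Hc; case: eqP Hc.
Qed.

Lemma sumL (G : ptree -> R) i :
  \sum_(s <- trees_of_size i) Lsr s * G s = (0 < i)%:R * G (ladder i).
Proof.
case: i => [|i].
  rewrite mul0r big1_seq // => s /andP [_ /mem_tos Hs].
  have -> : s = bullet by case: s Hs => [[|]].
  by rewrite /Lsr /Xlad /delta /= subrr mul0r.
rewrite (@eq_big_seq _ _ _ _ _ _ (fun s => (s == ladder i.+1)%:R * G s)); last first.
  move=> s /mem_tos Hs; rewrite /Lsr /Xlad /delta Hs.
  have -> : (s == bullet) = false by apply/negbTE/eqP => E; move: Hs; rewrite E.
  by rewrite subr0.
by rewrite sum_ind tos_count edges_ladder eqxx.
Qed.

Lemma sstarL (g : series R) u : sstar Lsr g u = \sum_(p <- decomp u) g p.2.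
Proof.
rewrite /sstar.
set n := edges u.
transitivity (\sum_(i < n.+1) \sum_(t <- trees_of_size (n - i))
   (count_mem ((i : nat), t) (decomp u))%:R * ((0 < i)%:R * g t)).
  apply: eq_bigr => i _.
  rewrite (eq_bigr (fun s => Lsr s * \sum_(t <- trees_of_size (n - i))
               g t * (count_mem u (star s t))%:R)); last first.
    by move=> s _; rewrite big_distrr; apply: eq_bigr => t _ /=; rewrite mulrA.
  rewrite sumL big_distrr; apply: eq_bigr => t _.
  case: (posnP i) => [Hi0|Hi] /=; first by rewrite !mul0r mulr0.
  by rewrite DC // !mul1r mulrC.
symmetry.
rewrite (@eq_big_seq _ _ _ _ _ _ (fun p => \sum_(i < n.+1) \sum_(t <- trees_of_size (n - i))
     (p == ((i : nat), t))%:R * ((0 < i)%:R * g t))); last first.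
  move=> [i0 t0] /decomp_prop /= [Hi0 He].
  rewrite (eq_bigr (fun i : 'I_n.+1 => (i0 == i)%:R * \sum_(t <- trees_of_size (n - i))
     (t0 == t)%:R * ((0 < i)%:R * g t))); last first.
    move=> i _; rewrite big_distrr; apply: eq_bigr => t _.
    by rewrite xpair_eqE -mulnb natrM /= !mulrA.
  rewrite -(big_mkord xpredT (fun i => (i0 == i)%:R * \sum_(t <- trees_of_size (n - i))
     (t0 == t)%:R * ((0 < i)%:R * g t))).
  rewrite sum_ind' /index_iota subn0 count_uniq_mem ?iota_uniq // mem_iota /=.
  have -> : (i0 < n.+1)%N by rewrite /n -He; lia.
  rewrite mul1r sum_ind' tos_count Hi0 mul1r.
  have -> : (edges t0 == n - i0)%N by apply/eqP; rewrite /n -He; lia.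
  by rewrite mul1r.
rewrite exchange_big /=; apply: eq_bigr => i _; rewrite exchange_big; apply: eq_bigr => t _.
by rewrite sum_ind.
Qed.

Lemma spowS (f : series R) k : spow f k.+1 = sstar f (spow f k).
Proof. by []. Qed.

Lemma spowL k u : spow Lsr k u = (Fk k u)%:R.
Proof.
elim: k u => [|k IH] u.
  rewrite /= /delta /Fk; case: eqP => // _.
  by rewrite /phi leqNgt leaves_gt0.
rewrite spowS sstarL (eq_bigr (fun p => (Fk k p.2)%:R)); last by move=> p _; rewrite IH.
by rewrite -natr_sum ML.
Qed.

End RPart.

Section Alt.
Variable R : fieldType.
Hypothesis charR : [pchar R] =i pred0.

Lemma nz n : (n%:R == 0 :> R) = (n == 0)%N.
Proof. exact: ((pcharf0P R).1 charR). Qed.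
Lemma nzS n : (n.+1%:R != 0 :> R).
Proof. by rewrite nz. Qed.
Lemma nzF n : (n`!%:R != 0 :> R).
Proof. by rewrite nz -lt0n fact_gt0. Qed.

Definition Tc (L m : nat) : R := (-1) ^+ L * ((L`! * m`!)%:R / ((L + m).+1)`!%:R).

Lemma Tc_rec L m : Tc L.+1 m + Tc L m = Tc L m.+1.
Proof.
rewrite /Tc addSn addnS !factS !natrM exprS.
have H1 := nzF (L + m).
have H2 := nzS (L + m).+1.
have H3 := nzS (L + m).
move: H2 H3.
rewrite -[(L+m).+2%:R]natr1 -[(L+m).+1%:R]natr1 natrD -[L.+1%:R]natr1 -[m.+1%:R]natr1.
move=> H2 H3.
field.
by rewrite H1 H2 H3.
Qed.
Lemma phi_diag k L : phi k L L = (k == L)%N :> nat.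
Proof.
rewrite /phi subnn bin0n; case: (k =P L) => [->|H]; first by rewrite leqnn subnn.
case: leqP => H2 //; rewrite subn_eq0; case: (leqP k L) => // H3; exfalso; apply: H; lia.
Qed.

Lemma hsum L m M : (L.+1 + m <= M)%N ->
  \sum_(1 <= k < M.+1) ((-1) ^+ k.+1 / k%:R) * (phi k (L.+1 + m) L.+1)%:R = Tc L m.
Proof.
elim: m L => [|m IH] L HM.
  rewrite (eq_bigr (fun k => (k == L.+1)%:R * ((-1) ^+ k.+1 / k%:R :> R))); last first.
    by move=> k _; rewrite addn0 phi_diag mulrC.
  have Hin : L.+1 \in index_iota 1 M.+1 by rewrite mem_index_iota; apply/andP; split; lia.
  rewrite sum_ind count_uniq_mem ?Hin; last by rewrite /index_iota iota_uniq.
  rewrite /Tc addn0 factS fact0 !exprS mul1r muln1 natrM.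
  have H1 := nzF L; have H2 := nzS L.
  field.
  by rewrite H1 addrC natr1 H2.
have Ea : (L.+1 + m.+1 = L.+2 + m)%N by lia.
rewrite (eq_bigr (fun k => ((-1) ^+ k.+1 / k%:R) * (phi k (L.+2 + m) L.+2)%:R
     + ((-1) ^+ k.+1 / k%:R) * (phi k (L.+1 + m) L.+1)%:R)); last first.
  move=> k _; rewrite Ea (phi_pascal _ (_ : L.+1 < L.+2 + m)%N) ?natrD ?mulrDr //; lia.
rewrite big_split /= IH ?IH -?Tc_rec //; lia.
Qed.

End Alt.

Unset Implicit Arguments.
Theorem theorem4p3 (R : fieldType) (charR : [pchar R] =i pred0) :
  log_star (Xlad R) (rhs R).
Proof.
split; first by rewrite /Xlad /=.
move=> u; exists (edges u) => M hM.
rewrite /log_partial.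
rewrite (eq_bigr (fun k => (-1)^+k.+1 / k%:R * (Fk k u)%:R)); last first.
  by move=> k _; rewrite -(spowL R k u).
case: (u =P bullet) => [->|Hu].
  rewrite big1_seq; first by rewrite /rhs.
  move=> k /andP [_]; rewrite mem_index_iota => /andP [Hk _].
  by rewrite /Fk eqxx; case: k Hk => // k _; rewrite mulr0.
have Hl := leaves_le u; have Hl0 := leaves_gt0 u.
have Hle := Hl.2 (introN eqP Hu).
set L := (leaves u).-1; set m := (edges u - leaves u)%N.
have HLeq : leaves u = L.+1 by rewrite /L; lia.
have Hn : edges u = (L.+1 + m)%N by rewrite /m /L; lia.
rewrite (eq_bigr (fun k => (-1)^+k.+1/k%:R * (phi k (L.+1 + m) L.+1)%:R)); last first.
  by move=> k _; rewrite /Fk (negbTE (introN eqP Hu)) Hn HLeq.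
rewrite hsum //; last by rewrite -Hn.
rewrite /rhs Hn HLeq addSn /=.
have Hb := bin_fact (leq_addr m L).
rewrite addKn in Hb.
rewrite /Tc factS natrM -Hb !natrM.
have H1 := nzF charR L; have H2 := nzF charR m; have H3 := nzS charR (L + m).
have H4 : ('C(L + m, L)%:R != 0 :> R) by rewrite nz // -lt0n bin_gt0 leq_addr.
field.
by rewrite H1 H2 H4 addrC -natrD natr1 H3.
Qed.
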